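(* Consider a liquid ($l$), its vapor ($v$) and a gas ($g$), each with extensive entropy $S_k:(\mathbb R^+)^3\to\mathbb R\cup\{-\infty\}$ of $W_k=(M_k,V_k,E_k)$ satisfying: the set $C_k=\{S_k>-\infty\}$ is non-empty closed convex, $S_k$ is concave, positively homogeneous of degree 1, upper semi-continuous, and $\mathcal C^2$ on $C_k$ with $\partial S_k/\partial E>0$. Define for each phase the temperature $T_k$, pressure $p_k$ and chemical potential $\mu_k$ by $1/T_k=\partial S_k/\partial E$, $p_k/T_k=\partial S_k/\partial V$, $\mu_k=-T_k\,\partial S_k/\partial M$. Let $\Sigma=S_l(W_l)+S_g(W_g)+S_v(W_v)$. (a) Without phase transition: fix $(M,V,E)$ and $M_l,M_g,M_v\ge0$ with $M=M_l+M_g+M_v$, and suppose $\Sigma$ attains its maximum over the set $\{W_k\in C_k:\ E=E_l+E_g+E_v,\ V=V_l+V_v,\ V_g=V_v\}$ at a point lying in the interior of this constraint set (all three phases present). Then at this maximizer $T_l=T_g=T_v$ and $p_l=p_g+p_v$ (Dalton's law). (b) With phase transition: fix $(M,V,E)$ and $M_g$, and suppose $\Sigma$ attains its maximum over $\{W_k\in C_k:\ M-M_g=M_l+M_v,\ E=E_l+E_g+E_v,\ V=V_l+V_v,\ V_g=V_v\}$ at an interior point. Then at this maximizer $T_l=T_g=T_v$, $p_l=p_g+p_v$, and moreover $\mu_l=\mu_v$.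
   Context: The volume constraints $V=V_l+V_v$, $V_g=V_v$ encode that the vapor and gas are miscible (occupy the same volume) while the liquid is immiscible with them. The gas does not exchange mass with the other phases. *)

(* Defs.v *)
From HB Require Import structures.
From mathcomp Require Import all_boot all_order all_algebra.
From mathcomp Require Import all_classical all_reals all_analysis.
Set Implicit Arguments. Unset Strict Implicit. Unset Printing Implicit Defensive.
Import Order.TTheory GRing.Theory Num.Theory.
Import numFieldNormedType.Exports.
Local Open Scope classical_set_scope.
Local Open Scope ring_scope.

Section Thermo.
Context {R : realType}.

Definition iM : 'I_3 := inord 0.
Definition iV : 'I_3 := inord 1.
Definition iE : 'I_3 := inord 2.
Definition Mof (W : 'rV[R]_3) : R := W ord0 iM.
Definition Vof (W : 'rV[R]_3) : R := W ord0 iV.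
Definition Eof (W : 'rV[R]_3) : R := W ord0 iE.
Definition ev (i : 'I_3) : 'rV[R]_3 := delta_mx ord0 i.

Definition Rplus3 : set 'rV[R]_3 := [set W | forall i, 0 <= W ord0 i].

Definition dom_S (S : 'rV[R]_3 -> \bar R) : set 'rV[R]_3 :=
  [set W | Rplus3 W /\ (-oo < S W)%E].

(* finite part of S, used for derivatives on the interior of C_k *)
Definition Sfin (S : 'rV[R]_3 -> \bar R) : 'rV[R]_3 -> R := fun W => fine (S W).

Definition convex_set3 (C : set 'rV[R]_3) : Prop :=
  forall x y (t : R), C x -> C y -> 0 <= t <= 1 -> C (t *: x + (1 - t) *: y).

Definition concave_ext (S : 'rV[R]_3 -> \bar R) : Prop :=
  forall x y (t : R), Rplus3 x -> Rplus3 y -> 0 < t < 1 ->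
    (t%:E * S x + (1 - t)%:E * S y <= S (t *: x + (1 - t) *: y)%R)%E.

Definition pos_homogeneous1 (S : 'rV[R]_3 -> \bar R) : Prop :=
  forall (l : R) W, 0 < l -> Rplus3 W -> S (l *: W) = (l%:E * S W)%E.

Definition usc_on_Rplus3 (S : 'rV[R]_3 -> \bar R) : Prop :=
  forall x (a : R), Rplus3 x -> (S x < a%:E)%E ->
    \forall y \near x, Rplus3 y -> (S y < a%:E)%E.

Definition C2_on (U : set 'rV[R]_3) (f : 'rV[R]_3 -> R) : Prop :=
  forall (i j : 'I_3) x, U x ->
    [/\ derivable f x (ev i),
        derivable ('D_(ev i) f) x (ev j)
      & {for x, continuous ('D_(ev j) ('D_(ev i) f))}].

Definition entropy_fun (S : 'rV[R]_3 -> \bar R) : Prop :=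
  [/\ [/\ (forall W, S W != +oo%E),
          dom_S S !=set0,
          closed (dom_S S)
        & convex_set3 (dom_S S)],
      [/\ concave_ext S,
          pos_homogeneous1 S
        & usc_on_Rplus3 S],
      C2_on (interior (dom_S S)) (Sfin S)
    & (forall W, interior (dom_S S) W -> 0 < 'D_(ev iE) (Sfin S) W)].

Definition temperature (S : 'rV[R]_3 -> \bar R) W : R :=
  ('D_(ev iE) (Sfin S) W)^-1.
Definition pressure (S : 'rV[R]_3 -> \bar R) W : R :=
  temperature S W * 'D_(ev iV) (Sfin S) W.
Definition chem_pot (S : 'rV[R]_3 -> \bar R) W : R :=
  - (temperature S W * 'D_(ev iM) (Sfin S) W).

Definition Sigma (Sl Sg Sv : 'rV[R]_3 -> \bar R) (Wl Wg Wv : 'rV[R]_3) : \bar R :=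
  (Sl Wl + Sg Wg + Sv Wv)%E.

Definition feasible_a (Sl Sg Sv : 'rV[R]_3 -> \bar R) (V E Ml Mg Mv : R)
    (Wl Wg Wv : 'rV[R]_3) : Prop :=
  [/\ [/\ dom_S Sl Wl, dom_S Sg Wg & dom_S Sv Wv],
      [/\ Mof Wl = Ml, Mof Wg = Mg & Mof Wv = Mv],
      E = Eof Wl + Eof Wg + Eof Wv,
      V = Vof Wl + Vof Wv
    & Vof Wg = Vof Wv].

Definition feasible_b (Sl Sg Sv : 'rV[R]_3 -> \bar R) (M V E Mg : R)
    (Wl Wg Wv : 'rV[R]_3) : Prop :=
  [/\ [/\ dom_S Sl Wl, dom_S Sg Wg & dom_S Sv Wv],
      Mof Wg = Mg /\ M - Mg = Mof Wl + Mof Wv,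
      E = Eof Wl + Eof Wg + Eof Wv,
      V = Vof Wl + Vof Wv
    & Vof Wg = Vof Wv].

Definition interior_point (Sl Sg Sv : 'rV[R]_3 -> \bar R) (Wl Wg Wv : 'rV[R]_3) : Prop :=
  [/\ interior (dom_S Sl) Wl, interior (dom_S Sg) Wg & interior (dom_S Sv) Wv].

End Thermo.

(* Main.v *)
Require Import Defs.
From HB Require Import structures.
From mathcomp Require Import all_boot all_order all_algebra.
From mathcomp Require Import all_classical all_reals all_analysis.
From mathcomp Require Import ring lra.
Import Order.TTheory GRing.Theory Num.Theory.
Import numFieldNormedType.Exports.
Local Open Scope classical_set_scope.
Local Open Scope ring_scope.

Lemma fermat0 (R : realType) (g : R -> R) (L : R) :
  g @ 0^' --> L -> (\forall h \near 0^', h * g h <= 0) -> L = 0.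
Proof.
move=> gL hP.
have [L0|L0|//] := ltgtP L 0.
- have gn : \forall h \near 0^', g h < 0 by apply: cvgr_lt; [exact: gL|exact: L0].
  have : \forall h \near 0^', g h < 0 /\ h * g h <= 0.
    near=> h; split; near: h; [exact: gn|exact: hP].
  move=> /nbhs_ballP [e e0 He].
  have /He : ball (0:R) e (- (e/2)).
    rewrite /ball /= sub0r opprK ger0_norm; rewrite /= in e0; lra.
  move=> /(_ _) [].  apply/negP => /eqP; rewrite /= in e0; lra.
  move=> a b; rewrite /= in e0; nra.
- have gn : \forall h \near 0^', 0 < g h by apply: cvgr_gt; [exact: gL|exact: L0].
  have : \forall h \near 0^', 0 < g h /\ h * g h <= 0.
    near=> h; split; near: h; [exact: gn|exact: hP].
  move=> /nbhs_ballP [e e0 He].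
  have /He : ball (0:R) e (e/2).
    rewrite /ball /= sub0r normrN ger0_norm; rewrite /= in e0; lra.
  move=> /(_ _) [].  apply/negP => /eqP; rewrite /= in e0; lra.
  move=> a b; rewrite /= in e0; nra.
Unshelve. all: by end_near. Qed.

Lemma qlim (R : realType) (f : 'rV[R]_3 -> R) x v (a : R) : derivable f x v ->
  (fun h => a * ((a*h)^-1 * (f ((a*h) *: v + x) - f x))) @ 0^' --> a * 'D_v f x.
Proof.
move=> df.
have [->|a0] := eqVneq a 0.
  rewrite mul0r; under eq_fun do rewrite mul0r; exact: cvg_cst.
apply: cvgM; first exact: cvg_cst.
have dq : (fun h : R => h^-1 *: ((f \o shift x) (h *: v) - f x)) @ 0^' --> 'D_v f x := df.
have sc : (fun h : R => a * h) @ 0^' `=>` 0^'.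
  have c : (fun h : R => a * h) @ 0 --> 0.
    have := @mulrl_continuous R a 0 => H.
    rewrite -[X in _ --> X](mulr0 a); exact: H.
  move=> A hA; rewrite /dnbhs /within /= in hA.
  have := c _ hA; rewrite /= => hA'.
  change (nbhs (0:R) (fun h => h != 0 -> A (a * h))).
  change (nbhs (0:R) (fun h => a * h != 0 -> A (a * h))) in hA'.
  move: hA'; apply: filterS => h /= P hn0; apply: P; rewrite mulf_neq0 //.
have H := cvg_comp _ _ sc dq.
exact H.
Qed.

Lemma qid (R : realType) (f : 'rV[R]_3 -> R) x v (a h : R) :
  h * (a * ((a*h)^-1 * (f ((a*h) *: v + x) - f x))) = f ((a*h) *: v + x) - f x.
Proof.
rewrite mulrA (mulrC h a) mulrA.
have [->|ne] := eqVneq (a * h) 0.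
  by rewrite scale0r add0r subrr !mulr0.
by rewrite mulfV // mul1r.
Qed.

Lemma key3 (R : realType) (f1 f2 f3 : 'rV[R]_3 -> R) x1 x2 x3 v1 v2 v3 (a1 a2 a3 : R) :
  derivable f1 x1 v1 -> derivable f2 x2 v2 -> derivable f3 x3 v3 ->
  (\forall h \near 0^', f1 ((a1*h) *: v1 + x1) + f2 ((a2*h) *: v2 + x2)
      + f3 ((a3*h) *: v3 + x3) <= f1 x1 + f2 x2 + f3 x3) ->
  a1 * 'D_v1 f1 x1 + a2 * 'D_v2 f2 x2 + a3 * 'D_v3 f3 x3 = 0.
Proof.
move=> d1 d2 d3 hP.
have H := cvgD (cvgD (@qlim R f1 x1 v1 a1 d1) (@qlim R f2 x2 v2 a2 d2)) (@qlim R f3 x3 v3 a3 d3).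
apply: (@fermat0 R); first by apply: H; exact: Proper_dnbhs_numFieldType.
move: hP; apply: filterS => h Hh.
rewrite /= ?fctE (mulrDr h) (mulrDr h) !qid; lra.
Qed.

Lemma Sfin_E (R : realType) (S : 'rV[R]_3 -> \bar R) W :
  (forall W, S W != +oo%E) -> dom_S S W -> S W = (Sfin S W)%:E.
Proof.
move=> nI [_ hW]; rewrite /Sfin; move: (nI W) hW.
by case: (S W) => [r| |] //=.
Qed.

Lemma pert (R : realType) (A : set 'rV[R]_3) W v (a : R) :
  interior A W -> \forall h \near 0^', A ((a*h) *: v + W).
Proof.
move=> hA.
have c : (fun h : R => (a*h) *: v + W) @ 0 --> W.
  have : (fun h : R => (a*h) *: v + W) @ 0 --> (a*0) *: v + W.
    apply: cvgD; last exact: cvg_cst.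
    apply: cvgZr_tmp.
    have := @mulrl_continuous R a 0 => H; exact: H.
  by rewrite mulr0 scale0r add0r.
apply: nbhs_dnbhs.
apply: c; exact: hA.
Qed.

Lemma coord (R : realType) (c : R) (i j : 'I_3) (W : 'rV[R]_3) :
  (c *: ev i + W) ord0 j = c * (i == j)%:R + W ord0 j.
Proof. by rewrite !mxE eqxx /= eq_sym. Qed.

Lemma stationary (R : realType) (Sl Sg Sv : 'rV[R]_3 -> \bar R) Wl Wg Wv
    (il ig iv : 'I_3) (al ag av : R) :
  entropy_fun Sl -> entropy_fun Sg -> entropy_fun Sv ->
  interior_point Sl Sg Sv Wl Wg Wv ->
  (forall h, dom_S Sl ((al*h) *: ev il + Wl) -> dom_S Sg ((ag*h) *: ev ig + Wg) ->
     dom_S Sv ((av*h) *: ev iv + Wv) ->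
     (Sigma Sl Sg Sv ((al*h) *: ev il + Wl) ((ag*h) *: ev ig + Wg)
        ((av*h) *: ev iv + Wv) <= Sigma Sl Sg Sv Wl Wg Wv)%E) ->
  al * 'D_(ev il) (Sfin Sl) Wl + ag * 'D_(ev ig) (Sfin Sg) Wg
    + av * 'D_(ev iv) (Sfin Sv) Wv = 0.
Proof.
move=> [[nIl _ _ _] _ C2l _] [[nIg _ _ _] _ C2g _] [[nIv _ _ _] _ C2v _].
move=> [Il Ig Iv] Hmax.
apply: key3.
- by have [] := C2l il il Wl Il.
- by have [] := C2g ig ig Wg Ig.
- by have [] := C2v iv iv Wv Iv.
near=> h.
have dl : dom_S Sl ((al*h) *: ev il + Wl) by near: h; exact: pert.
have dg : dom_S Sg ((ag*h) *: ev ig + Wg) by near: h; exact: pert.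
have dv : dom_S Sv ((av*h) *: ev iv + Wv) by near: h; exact: pert.
have := Hmax h dl dg dv.
rewrite /Sigma (@Sfin_E _ _ _ nIl dl) (@Sfin_E _ _ _ nIg dg) (@Sfin_E _ _ _ nIv dv).
rewrite (@Sfin_E _ _ _ nIl (nbhs_singleton Il)) (@Sfin_E _ _ _ nIg (nbhs_singleton Ig)).
rewrite (@Sfin_E _ _ _ nIv (nbhs_singleton Iv)) -!EFinD lee_fin.
by [].
Unshelve. all: by end_near. Qed.

Lemma eEM : (iE == iM) = false. Proof. by apply/negbTE/eqP => /(congr1 val); rewrite /= !inordK. Qed.
Lemma eEV : (iE == iV) = false. Proof. by apply/negbTE/eqP => /(congr1 val); rewrite /= !inordK. Qed.
Lemma eVM : (iV == iM) = false. Proof. by apply/negbTE/eqP => /(congr1 val); rewrite /= !inordK. Qed.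
Lemma eVE : (iV == iE) = false. Proof. by apply/negbTE/eqP => /(congr1 val); rewrite /= !inordK. Qed.
Lemma eME : (iM == iE) = false. Proof. by apply/negbTE/eqP => /(congr1 val); rewrite /= !inordK. Qed.
Lemma eMV : (iM == iV) = false. Proof. by apply/negbTE/eqP => /(congr1 val); rewrite /= !inordK. Qed.

Lemma alg_a (R : realType) (a b c x y z : R) :
  1*a + (-1)*b + 0*c = 0 -> 0*a + 1*b + (-1)*c = 0 -> 1*x + (-1)*y + (-1)*z = 0 ->
  [/\ a^-1 = b^-1, b^-1 = c^-1 & a^-1 * x = b^-1*y + c^-1*z].
Proof.
move=> h1 h2 h3.
have e1 : b = a by lra.
have e2 : c = a by lra.
rewrite e1 e2 -mulrDr; split => //; congr (_ * _); lra.
Qed.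

Lemma alg_b (R : realType) (a b c x y z m n k : R) :
  1*a + (-1)*b + 0*c = 0 -> 0*a + 1*b + (-1)*c = 0 -> 1*x + (-1)*y + (-1)*z = 0 ->
  1 * m + 0 * n + (-1) * k = 0 ->
  [/\ a^-1 = b^-1, b^-1 = c^-1, a^-1 * x = b^-1*y + c^-1*z & - (a^-1 * m) = - (c^-1 * k)].
Proof.
move=> h1 h2 h3 h4.
have [t1 t2 t3] := @alg_a R _ _ _ _ _ _ h1 h2 h3.
have e2 : c = a by lra.
have e3 : k = m by lra.
by split => //; rewrite e2 e3.
Qed.

Ltac simp := rewrite /Mof /Vof /Eof /ev !mxE ?eqxx /= ?eEM ?eEV ?eVM ?eVE ?eME ?eMV /= ?mulr0 ?mulr1 ?addr0 ?add0r.

Theorem proposition2p2 (R : realType) (Sl Sg Sv : 'rV[R]_3 -> \bar R) :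
  entropy_fun Sl -> entropy_fun Sg -> entropy_fun Sv ->
  (* (a) without phase transition *)
  (forall (M V E Ml Mg Mv : R) (Wl Wg Wv : 'rV[R]_3),
     0 <= Ml -> 0 <= Mg -> 0 <= Mv -> M = Ml + Mg + Mv ->
     feasible_a Sl Sg Sv V E Ml Mg Mv Wl Wg Wv ->
     (forall Wl' Wg' Wv', feasible_a Sl Sg Sv V E Ml Mg Mv Wl' Wg' Wv' ->
        (Sigma Sl Sg Sv Wl' Wg' Wv' <= Sigma Sl Sg Sv Wl Wg Wv)%E) ->
     interior_point Sl Sg Sv Wl Wg Wv ->
     [/\ temperature Sl Wl = temperature Sg Wg,
         temperature Sg Wg = temperature Sv Wv
       & pressure Sl Wl = pressure Sg Wg + pressure Sv Wv]) /\
  (* (b) with phase transition *)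
  (forall (M V E Mg : R) (Wl Wg Wv : 'rV[R]_3),
     feasible_b Sl Sg Sv M V E Mg Wl Wg Wv ->
     (forall Wl' Wg' Wv', feasible_b Sl Sg Sv M V E Mg Wl' Wg' Wv' ->
        (Sigma Sl Sg Sv Wl' Wg' Wv' <= Sigma Sl Sg Sv Wl Wg Wv)%E) ->
     interior_point Sl Sg Sv Wl Wg Wv ->
     [/\ temperature Sl Wl = temperature Sg Wg,
         temperature Sg Wg = temperature Sv Wv,
         pressure Sl Wl = pressure Sg Wg + pressure Sv Wv
       & chem_pot Sl Wl = chem_pot Sv Wv]).
Proof.
move=> hl hg hv; split.
  move=> M V E Ml Mg Mv Wl Wg Wv _ _ _ _ [[dl dg dv] [ml mg mv] hE hV hVg] Hmax Hint.
  move: ml mg mv hE hV hVg; rewrite /Mof /Vof /Eof => ml mg mv hE hV hVg.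
  have s1 : 1 * 'D_(ev iE) (Sfin Sl) Wl + (-1) * 'D_(ev iE) (Sfin Sg) Wg
      + 0 * 'D_(ev iE) (Sfin Sv) Wv = 0.
    try clear s1; try clear s2; try clear s3.
    apply: stationary => // h d1 d2 d3; apply: Hmax.
    split; [by split | split | | | ]; simp; lra.
  have s2 : 0 * 'D_(ev iE) (Sfin Sl) Wl + 1 * 'D_(ev iE) (Sfin Sg) Wg
      + (-1) * 'D_(ev iE) (Sfin Sv) Wv = 0.
    try clear s1; try clear s2; try clear s3.
    apply: stationary => // h d1 d2 d3; apply: Hmax.
    split; [by split | split | | | ]; simp; lra.
  have s3 : 1 * 'D_(ev iV) (Sfin Sl) Wl + (-1) * 'D_(ev iV) (Sfin Sg) Wg
      + (-1) * 'D_(ev iV) (Sfin Sv) Wv = 0.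
    try clear s1; try clear s2; try clear s3.
    apply: stationary => // h d1 d2 d3; apply: Hmax.
    split; [by split | split | | | ]; simp; lra.
  rewrite /pressure /temperature.
exact: (@alg_a R _ _ _ _ _ _ s1 s2 s3).
move=> M V E Mg Wl Wg Wv [[dl dg dv] [mg hM] hE hV hVg] Hmax Hint.
move: mg hM hE hV hVg; rewrite /Mof /Vof /Eof => mg hM hE hV hVg.
have s1 : 1 * 'D_(ev iE) (Sfin Sl) Wl + (-1) * 'D_(ev iE) (Sfin Sg) Wg
    + 0 * 'D_(ev iE) (Sfin Sv) Wv = 0.
  try clear s1; try clear s2; try clear s3.
    apply: stationary => // h d1 d2 d3; apply: Hmax.
  split; [by split | split | | | ]; simp; lra.
have s2 : 0 * 'D_(ev iE) (Sfin Sl) Wl + 1 * 'D_(ev iE) (Sfin Sg) Wg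
    + (-1) * 'D_(ev iE) (Sfin Sv) Wv = 0.
  try clear s1; try clear s2; try clear s3.
    apply: stationary => // h d1 d2 d3; apply: Hmax.
  split; [by split | split | | | ]; simp; lra.
have s3 : 1 * 'D_(ev iV) (Sfin Sl) Wl + (-1) * 'D_(ev iV) (Sfin Sg) Wg
    + (-1) * 'D_(ev iV) (Sfin Sv) Wv = 0.
  try clear s1; try clear s2; try clear s3.
    apply: stationary => // h d1 d2 d3; apply: Hmax.
  split; [by split | split | | | ]; simp; lra.
have s4 : 1 * 'D_(ev iM) (Sfin Sl) Wl + 0 * 'D_(ev iM) (Sfin Sg) Wg
    + (-1) * 'D_(ev iM) (Sfin Sv) Wv = 0.
  try clear s1; try clear s2; try clear s3.
    apply: stationary => // h d1 d2 d3; apply: Hmax.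
  split; [by split | split | | | ]; simp; lra.
rewrite /chem_pot /pressure /temperature.
exact: (@alg_b R _ _ _ _ _ _ _ _ _ s1 s2 s3 s4).
Qed.
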